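(* Let $\mathbb{F}$ be a subfield of $\mathbb{C}$ and $r\in\mathbb{N}^{+}$. For every $n\in\mathbb{N}^{+}$ let $\overline{v_n}\in\mathbb{F}^{r}$ be a column vector. Let $(w_n)$ be a C-finite sequence (over $\mathbb{C}$) of positive real numbers, and let $(M_n)$ be a C-finite matrix sequence (over $\mathbb{C}$) of $r\times r$ matrices with entries in $\mathbb{F}$ such that $\overline{v_{n+1}}=\frac{1}{w_n}M_n\overline{v_n}$ for every $n$. Then for each $j=1,\dots,r$ the sequence $(\overline{v_n}[j])_n$ is C$^2$-finite over $\mathbb{C}$; moreover, there is a single C$^2$-finite recurrence (the same $s$ and the same coefficient sequences $c^{(0)}_n,\dots,c^{(s)}_n$) satisfied by all of the sequences $(\overline{v_n}[j])_n$, $j=1,\dots,r$.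
   Context: A sequence $(a_n)$ over a field $\mathbb{K}$ is C-finite if there exist $s\in\mathbb{N}$ and constants $c^{(0)},\dots,c^{(s-1)}\in\mathbb{K}$ such that $a_{n+s}=c^{(s-1)}a_{n+s-1}+\dots+c^{(0)}a_n$ for every $n\ge s$. It is C$^2$-finite if there exist $s\in\mathbb{N}$ and C-finite sequences $(c^{(0)}_n),\dots,(c^{(s)}_n)$ over $\mathbb{K}$ with $c^{(s)}_n\ne0$ for every $n$, such that $c^{(s)}_n a_{n+s}=c^{(s-1)}_n a_{n+s-1}+\dots+c^{(0)}_n a_n$ for every $n\ge s$. A sequence $(A_n)$ of matrices of a fixed size is a C-finite matrix sequence if for every position $(i,j)$ the sequence $(A_n[i,j])_n$ is C-finite. *)

(* Defs.v *)
From HB Require Import structures.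
From mathcomp Require Import all_boot all_order all_algebra.
Set Implicit Arguments. Unset Strict Implicit. Unset Printing Implicit Defensive.
Import Order.TTheory GRing.Theory Num.Theory.
Local Open Scope ring_scope.

Definition Cfinite (K : fieldType) (a : nat -> K) : Prop :=
  exists (s : nat) (c : nat -> K),
    forall n : nat, (s <= n)%N ->
      a (n + s)%N = \sum_(i < s) c i * a (n + i)%N.

Definition C2rec (K : fieldType) (s : nat) (c : nat -> nat -> K)
  (a : nat -> K) : Prop :=
  forall n : nat, (s <= n)%N ->
    c s n * a (n + s)%N = \sum_(i < s) c i n * a (n + i)%N.

Definition C2coeffs (K : fieldType) (s : nat) (c : nat -> nat -> K) : Prop :=
  (forall i : nat, (i <= s)%N -> Cfinite (c i)) /\ (forall n : nat, c s n != 0).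

Definition C2finite (K : fieldType) (a : nat -> K) : Prop :=
  exists (s : nat) (c : nat -> nat -> K), C2coeffs s c /\ C2rec s c a.

Definition Cfinite_mx (K : fieldType) (m n : nat) (A : nat -> 'M[K]_(m, n)) : Prop :=
  forall (i : 'I_m) (j : 'I_n), Cfinite (fun k => A k i j).

(* Main.v *)
Require Import Defs.
From HB Require Import structures.
From mathcomp Require Import all_boot all_order all_algebra.
From mathcomp Require Import mxtens zify.
From Stdlib Require Import Classical.
Import Order.TTheory GRing.Theory Num.Theory.
Local Open Scope ring_scope.
Set Implicit Arguments. Unset Strict Implicit. Unset Printing Implicit Defensive.

Definition Crep (K : fieldType) (a : nat -> K) : Prop :=
  exists d (P : 'M[K]_d) (x : 'rV[K]_d) (y : 'cV[K]_d) N,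
    forall n, a (n + N)%N = (x *m P ^+ n *m y) 0 0.

Lemma Cfinite_thr (K : fieldType) (a : nat -> K) d (c : nat -> K) N :
  (forall m, (N <= m)%N -> a (m + d)%N = \sum_(i < d) c i * a (m + i)%N) ->
  Cfinite a.
Proof.
move=> H; exists (N + d)%N, (fun i => if (N <= i)%N then c (i - N)%N else 0).
move=> n _; rewrite big_split_ord /= big1 ?add0r; last first.
  by move=> i _; rewrite /= leqNgt ltn_ord mul0r.
rewrite addnA H ?leq_addl //; apply: eq_bigr => i _ /=.
by rewrite leq_addr addKn addnA.
Qed.

Lemma Crep_Cfinite (K : fieldType) (a : nat -> K) : Crep a -> Cfinite a.
Proof.
case=> [[|d] [P [x [y [N H]]]]].
  apply: (@Cfinite_thr _ _ 0 (fun _ => 0) N) => m Hm.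
  rewrite big_ord0 addn0 -(subnK Hm) H.
  by rewrite mxE big_ord0.
have CH := Cayley_Hamilton P.
set p := char_poly P in CH.
have sp : size p = d.+2 by rewrite size_char_poly.
have mp : p \is monic by exact: char_poly_monic.
apply: (@Cfinite_thr _ _ d.+1 (fun i => - p`_i) N) => m Hm.
rewrite -(subnK Hm) -addnA (addnC N) addnA H.
have E : horner_mx P p = \sum_(i < d.+2) p`_i *: P ^+ i.
  rewrite /horner_mx /horner_morph horner_coef size_map_poly sp.
  apply: eq_bigr => i _; rewrite coef_map /=.
  by rewrite -mul_scalar_mx.
rewrite E big_ord_recr /= in CH.
have lc : p`_d.+1 = 1 by move/monicP: mp; rewrite /lead_coef sp.
rewrite lc scale1r in CH.
have CH' : P ^+ d.+1 = - \sum_(i < d.+1) p`_i *: P ^+ i.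
  by apply/eqP; rewrite -addr_eq0 addrC CH.
rewrite exprD CH' mulrN mulr_sumr -mulmxE mulmxN mulNmx mulmx_sumr mulmx_suml mxE.
rewrite summxE -sumrN; apply: eq_bigr => i _.
rewrite -scalemxAr -scalemxAr -scalemxAl mxE mulNr; congr (- (_ * _)).
by rewrite addnAC H exprD mulmxE.
Qed.

Lemma Cfinite_Crep (K : fieldType) (a : nat -> K) : Cfinite a -> Crep a.
Proof.
case=> s [c H].
pose P : 'M[K]_s := \matrix_(i, j) (if (j.+1 < s)%N then (i == j.+1 :> nat)%:R else c i).
pose X m : 'rV[K]_s := \row_(j < s) a (m + j)%N.
have XS m : (s <= m)%N -> X m *m P = X m.+1.
  move=> Hm; apply/rowP => j; rewrite !mxE.
  under eq_bigr => i _ do rewrite !mxE.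
  case Hj : (j.+1 < s)%N.
  - rewrite (bigD1 (Ordinal Hj)) //= eqxx mulr1 big1 ?addr0 ?addnS //.
    by move=> i /negPf Hi; rewrite -val_eqE /= in Hi; rewrite Hi mulr0.
  - have ej : j.+1 = s by apply/eqP; rewrite eqn_leq ltn_ord leqNgt Hj.
    rewrite addSnnS ej H //; apply: eq_bigr => i _; rewrite mulrC.
    by [].
exists s, P, (X s), (\col_(j < s) (j == 0 :> nat)%:R), s => n.
have -> : X s *m P ^+ n = X (n + s)%N.
  elim: n => [|n IH]; first by rewrite expr0 mulmx1 add0n.
  by rewrite exprSr -mulmxE mulmxA IH XS ?leq_addl.
rewrite mxE; case: (posnP s) => [s0|spos].
  by clear XS; subst s; rewrite big_ord0 H ?big_ord0.
rewrite (bigD1 (Ordinal spos)) //= big1 ?addr0; first by rewrite !mxE addn0 mulr1.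
by move=> i; rewrite !mxE -val_eqE /= => /negPf ->; rewrite mulr0.
Qed.

Lemma mxexpD (K : fieldType) d (P : 'M[K]_d) a b : P ^+ (a + b) = P ^+ a *m P ^+ b.
Proof. by rewrite exprD. Qed.

Lemma Crep_le (K : fieldType) (a : nat -> K) d (P : 'M[K]_d) (x : 'rV[K]_d) (y : 'cV[K]_d) N N' :
  (N <= N')%N -> (forall n, a (n + N)%N = (x *m P ^+ n *m y) 0 0) ->
  forall n, a (n + N')%N = ((x *m P ^+ (N' - N)) *m P ^+ n *m y) 0 0.
Proof.
move=> HN H n; rewrite -{1}(subnK HN) addnA H.
by rewrite addnC mxexpD !mulmxA.
Qed.

Lemma Crep_shift (K : fieldType) (a : nat -> K) k :
  Crep a -> Crep (fun n => a (n + k)%N).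
Proof.
case=> d [P [x [y [N H]]]]; exists d, P, (x *m P ^+ k), y, N => n.
by rewrite -addnA (addnC N) addnA H addnC mxexpD !mulmxA.
Qed.

Lemma Crep_const (K : fieldType) (c : K) : Crep (fun _ => c).
Proof.
exists 1%N, 1, (c%:M), 1, 0%N => n.
by rewrite expr1n mulmx1 mulmx1 mxE eqxx mulr1n.
Qed.

Lemma Crep_add (K : fieldType) (a b : nat -> K) :
  Crep a -> Crep b -> Crep (fun n => a n + b n).
Proof.
case=> d1 [P1 [x1 [y1 [N1 H1]]]]; case=> d2 [P2 [x2 [y2 [N2 H2]]]].
have H1' := Crep_le (leq_maxl N1 N2) H1.
have H2' := Crep_le (leq_maxr N1 N2) H2.
exists (d1 + d2)%N, (block_mx P1 0 0 P2),
  (row_mx (x1 *m P1 ^+ (maxn N1 N2 - N1)) (x2 *m P2 ^+ (maxn N1 N2 - N2))),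
  (col_mx y1 y2), (maxn N1 N2) => n.
have -> : block_mx P1 0 0 P2 ^+ n = block_mx (P1 ^+ n) 0 0 (P2 ^+ n).
  elim: n => [|n IH]; first by rewrite !expr0 -scalar_mx_block.
  rewrite !exprS IH -!mulmxE mulmx_block.
  by rewrite !mulmx0 !mul0mx !addr0 !add0r.
rewrite mul_row_block !mulmx0 !addr0 !add0r mul_row_col mxE H1' H2'.
by [].
Qed.

Lemma Crep_mul (K : fieldType) (a b : nat -> K) :
  Crep a -> Crep b -> Crep (fun n => a n * b n).
Proof.
case=> d1 [P1 [x1 [y1 [N1 H1]]]]; case=> d2 [P2 [x2 [y2 [N2 H2]]]].
have H1' := Crep_le (leq_maxl N1 N2) H1.
have H2' := Crep_le (leq_maxr N1 N2) H2.
set x1' := x1 *m _ in H1'; set x2' := x2 *m _ in H2'.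
exists (d1 * d2)%N, (P1 *t P2), (x1' *t x2'), (y1 *t y2), (maxn N1 N2) => n.
have -> : (x1' *t x2') *m (P1 *t P2) ^+ n = (x1' *m P1 ^+ n) *t (x2' *m P2 ^+ n).
  elim: n => [|n IH]; first by rewrite !expr0 !mulmx1.
  by rewrite !exprSr -!mulmxE !mulmxA IH tensmx_mul.
rewrite (tensmx_mul (x1' *m P1 ^+ n) (x2' *m P2 ^+ n) y1 y2) H1' H2' !mxE.
by rewrite !(ord1 (mxtens_unindex _).1) !(ord1 (mxtens_unindex _).2).
Qed.

Lemma Crep_ext (K : fieldType) (a b : nat -> K) :
  (forall n, a n = b n) -> Crep a -> Crep b.
Proof.
move=> E [d [P [x [y [N H]]]]]; exists d, P, x, y, N => n; by rewrite -E.
Qed.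

Lemma Crep_sum (K : fieldType) (I : Type) (r : seq I) (Q : pred I)
  (F : I -> nat -> K) :
  (forall i, Q i -> Crep (F i)) -> Crep (fun n => \sum_(i <- r | Q i) F i n).
Proof.
move=> H; elim: r => [|i r IH].
  by apply: Crep_ext (Crep_const 0) => n; rewrite big_nil.
case Qi: (Q i).
  apply: Crep_ext (Crep_add (H i Qi) IH) => n; by rewrite big_cons Qi.
by apply: Crep_ext IH => n; rewrite big_cons Qi.
Qed.

Lemma Crep_prod (K : fieldType) (I : Type) (r : seq I) (Q : pred I)
  (F : I -> nat -> K) :
  (forall i, Q i -> Crep (F i)) -> Crep (fun n => \prod_(i <- r | Q i) F i n).
Proof.
move=> H; elim: r => [|i r IH].
  by apply: Crep_ext (Crep_const 1) => n; rewrite big_nil.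
case Qi: (Q i).
  apply: Crep_ext (Crep_mul (H i Qi) IH) => n; by rewrite big_cons Qi.
by apply: Crep_ext IH => n; rewrite big_cons Qi.
Qed.

Lemma Crep_det (K : fieldType) k (A : nat -> 'M[K]_k) :
  (forall i j, Crep (fun n => A n i j)) -> Crep (fun n => \det (A n)).
Proof.
move=> H; apply: Crep_sum => s _.
apply: Crep_mul; first exact: Crep_const.
by apply: Crep_prod => i _; apply: H.
Qed.

Lemma Crep_conj (C : numClosedFieldType) (a : nat -> C) :
  Crep a -> Crep (fun n => (a n)^*).
Proof.
move=> /Crep_Cfinite [s [c H]]; apply: Cfinite_Crep.
exists s, (fun i => (c i)^*) => n Hn.
by rewrite H // rmorph_sum; apply: eq_bigr => i _; rewrite rmorphM.
Qed.

Lemma Cfinite_runs (K : fieldType) (f : nat -> K) :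
  Cfinite f -> exists t, forall n, (t <= n)%N ->
    (forall m, (n <= m < n + t)%N -> f m = 0) -> forall m, (n <= m)%N -> f m = 0.
Proof.
case=> s [c H]; exists s => n Hn Z.
elim/ltn_ind => m IH hm.
case: (ltnP m (n + s)) => h.
  by apply: Z; rewrite hm h.
have em : m = ((m - s) + s)%N by lia.
have hms : (n <= (m - s)%N)%N by lia.
rewrite em H; last by lia.
rewrite big1 // => i _; rewrite IH ?mulr0 //.
  have := ltn_ord i; lia.
lia.
Qed.

Fixpoint Bp (C : fieldType) r (M : nat -> 'M[C]_r) (m i : nat) : 'M[C]_r :=
  match i with 0 => 1 | i'.+1 => M (m + i')%N *m Bp M m i' end.

Lemma Crep_Bp (C : fieldType) r (M : nat -> 'M[C]_r) i a b :
  Cfinite_mx M -> Crep (fun m => Bp M m i a b).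
Proof.
move=> hM; elim: i a b => [|i IH] a b /=.
  exact: Crep_const.
have : Crep (fun m => \sum_(k <- index_enum 'I_r | xpredT k) M (m + i)%N a k * Bp M m i k b).
  apply: Crep_sum => k _; apply: Crep_mul => //.
  by apply: (@Crep_shift _ (fun m => M m a k) i); apply: Cfinite_Crep.
by apply: Crep_ext => n; rewrite mxE.
Qed.

Definition Wp (C : fieldType) (w : nat -> C) (m i : nat) : C :=
  \prod_(l < i) w (m + l)%N.

Lemma Crep_Wp (C : fieldType) (w : nat -> C) i c :
  Cfinite w -> Crep (fun n => Wp w (n + c) i).
Proof.
move=> hw; apply: Crep_prod => l _.
apply: Crep_ext (Crep_shift (c + l) (Cfinite_Crep hw)) => n.
by rewrite addnA.
Qed.

Lemma Bp_v (C : fieldType) r (M : nat -> 'M[C]_r) (v : nat -> 'cV[C]_r) w :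
  (forall k, w k != 0) ->
  (forall k, v k.+1 = (w k)^-1 *: (M k *m v k)) ->
  forall m i, Bp M m i *m v m = Wp w m i *: v (m + i)%N.
Proof.
move=> hw0 hrec m; elim=> [|i IH] /=.
  by rewrite mul1mx /Wp big_ord0 scale1r addn0.
rewrite -mulmxA IH -scalemxAr /Wp big_ord_recr /= addnS hrec scalerA.
by rewrite mulfK.
Qed.

Definition mnr (C : fieldType) r (M : nat -> 'M[C]_r) m k
  (f : 'I_k -> 'I_r * 'I_r) (g : 'I_k -> nat) : C :=
  \det (\matrix_(a, b) Bp M m (g b) (f a).1 (f a).2).

Definition FF (C : numClosedFieldType) r (M : nat -> 'M[C]_r) k Q m : C :=
  \sum_(f : {ffun 'I_k -> 'I_r * 'I_r}) \sum_(g : {ffun 'I_k -> 'I_Q})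
     mnr M m f (fun b => g b) * (mnr M m f (fun b => g b))^*.

Lemma Crep_mnr (C : fieldType) r (M : nat -> 'M[C]_r) k f g :
  Cfinite_mx M -> Crep (fun m => @mnr C r M m k f g).
Proof.
move=> hM; apply: Crep_det => a b.
by apply: Crep_ext (Crep_Bp (g b) (f a).1 (f a).2 hM) => n; rewrite mxE.
Qed.

Lemma Crep_FF (C : numClosedFieldType) r (M : nat -> 'M[C]_r) k Q :
  Cfinite_mx M -> Crep (FF M k Q).
Proof.
move=> hM; apply: Crep_sum => f _; apply: Crep_sum => g _.
by apply: Crep_mul; [|apply: Crep_conj]; apply: Crep_mnr.
Qed.

Lemma FF_ge0 (C : numClosedFieldType) r (M : nat -> 'M[C]_r) k Q m :
  0 <= FF M k Q m.
Proof.
by apply: sumr_ge0 => f _; apply: sumr_ge0 => g _; rewrite -normCK exprn_ge0.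
Qed.

Lemma FF_eq0 (C : numClosedFieldType) r (M : nat -> 'M[C]_r) k Q m :
  FF M k Q m = 0 ->
  forall (f : {ffun 'I_k -> 'I_r * 'I_r}) (g : {ffun 'I_k -> 'I_Q}),
    mnr M m f (fun b => g b) = 0.
Proof.
move=> H f g.
have hf : forall f (g : {ffun 'I_k -> 'I_Q}),
    0 <= mnr M m f (fun b => g b) * (mnr M m f (fun b => g b))^*.
  by move=> f0 g0; rewrite -normCK exprn_ge0.
move: H; rewrite /FF => /psumr_eq0P H1.
have {H1} := H1 (fun f0 _ => sumr_ge0 _ (fun g0 _ => hf f0 g0)) f isT.
move=> /psumr_eq0P H2; have := H2 (fun g0 _ => hf f g0) g isT.
by rewrite -normCK => /eqP; rewrite expf_eq0 /= normr_eq0 => /eqP.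
Qed.

Definition evz (C : fieldType) (h : nat -> C) :=
  exists N, forall m, (N <= m)%N -> h m = 0.

Definition Pk (C : numClosedFieldType) r (M : nat -> 'M[C]_r) k :=
  exists Q, ~ evz (FF M k Q).

Lemma Pk1 (C : numClosedFieldType) r (M : nat -> 'M[C]_r) :
  (0 < r)%N -> Pk M 1.
Proof.
move=> hr; exists 1%N; case=> N HN.
have := FF_eq0 (HN N (leqnn N)) [ffun _ => (Ordinal hr, Ordinal hr)] [ffun _ => ord0].
rewrite /mnr det_mx11 !mxE !ffunE /=.
change ((1%:M : 'M[C]_r) (Ordinal hr) (Ordinal hr) = 0 -> False).
by rewrite mxE eqxx => /eqP; rewrite oner_eq0.
Qed.

Lemma notPk_big (C : numClosedFieldType) r (M : nat -> 'M[C]_r) :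
  ~ Pk M (r * r).+1.
Proof.
case=> Q; apply; exists 0%N => m _.
apply: big1 => f _; apply: big1 => g _.
have : ~~ injectiveb f.
  apply/negP => /injectiveP /leq_card; rewrite card_prod !card_ord.
  by rewrite ltnn.
case/injectivePn => a [b ab fab].
by rewrite /mnr (determinant_alternate ab) ?mul0r // => j; rewrite !mxE fab.
Qed.

Lemma switch (P : nat -> Prop) N : P 1%N -> ~ P N.+1 -> exists k, P k /\ ~ P k.+1.
Proof.
move=> P1 PN; apply: NNPP => H; apply: PN.
have Hs : forall k, P k -> P k.+1.
  move=> k Pk; apply: NNPP => nP; apply: H; by exists k.
by elim: N => [|n IH] //; apply: Hs.
Qed.

Definition gx k (g : 'I_k -> nat) (q : nat) (b : 'I_k.+1) : nat :=
  if unlift ord_max b is Some b' then g b' else q.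

Definition fx (r : nat) k (f : 'I_k -> 'I_r * 'I_r) (rho : 'I_r * 'I_r)
  (a : 'I_k.+1) : 'I_r * 'I_r :=
  if unlift ord_max a is Some a' then f a' else rho.

Definition cofm (C : fieldType) r (M : nat -> 'M[C]_r) m k
  (f : 'I_k -> 'I_r * 'I_r) (g : 'I_k -> nat) q (j : 'I_k.+1) : C :=
  (-1) ^+ (k + j) *
  \det (\matrix_(a < k, b < k) Bp M m (gx g q (lift j b)) (f a).1 (f a).2).

Lemma mnr_ext (C : fieldType) r (M : nat -> 'M[C]_r) m k f1 f2 g1 g2 :
  f1 =1 f2 -> g1 =1 g2 -> @mnr C r M m k f1 g1 = mnr M m f2 g2.
Proof.
by move=> E1 E2; rewrite /mnr; congr (\det _); apply/matrixP => a b; rewrite !mxE E1 E2.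
Qed.

Lemma laplace (C : fieldType) r (M : nat -> 'M[C]_r) m k f g q rho :
  mnr M m (@fx r k f rho) (gx g q) =
  \sum_(j : 'I_k.+1) Bp M m (gx g q j) rho.1 rho.2 * cofm M m f g q j.
Proof.
rewrite /mnr (expand_det_row _ ord_max); apply: eq_bigr => j _.
rewrite !mxE /fx unlift_none; congr (_ * _).
rewrite /cofactor /cofm; congr (_ * \det _).
apply/matrixP => a b; rewrite !mxE /fx liftK.
by [].
Qed.

Lemma cofm_max (C : fieldType) r (M : nat -> 'M[C]_r) m k f g q :
  cofm M m f g q ord_max = @mnr C r M m k f g.
Proof.
rewrite /cofm /= exprD -exprMn mulrNN mulr1 expr1n mul1r.
by rewrite /mnr; congr (\det _); apply/matrixP => a b; rewrite !mxE /gx liftK.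
Qed.

Lemma rel_mx (C : fieldType) r (M : nat -> 'M[C]_r) m k f g q :
  (forall rho, mnr M m (@fx r k f rho) (gx g q) = 0) ->
  \sum_(j : 'I_k.+1) cofm M m f g q j *: Bp M m (gx g q j) = 0.
Proof.
move=> H; apply/matrixP => a b; rewrite summxE mxE.
transitivity (mnr M m (fx f (a, b)) (gx g q)); last exact: H.
rewrite laplace; apply: eq_bigr => j _; by rewrite mxE mulrC.
Qed.

Definition lam (C : numClosedFieldType) r (M : nat -> 'M[C]_r) k s0 q i m : C :=
  \sum_(f : {ffun 'I_k -> 'I_r * 'I_r}) \sum_(g : {ffun 'I_k -> 'I_s0})
    (mnr M m f (fun b => g b))^* *
    \sum_(j : 'I_k.+1) (gx (fun b => g b) q j == i)%:R * cofm M m f (fun b => g b) q j.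

Lemma Crep_lam (C : numClosedFieldType) r (M : nat -> 'M[C]_r) k s0 q i c :
  Cfinite_mx M -> Crep (fun n => lam M k s0 q i (n + c)).
Proof.
move=> hM; apply: Crep_sum => f _; apply: Crep_sum => g _.
apply: Crep_mul.
  apply: Crep_conj; exact: (Crep_shift c (Crep_mnr f (fun b => g b) hM)).
apply: Crep_sum => j _; apply: Crep_mul; first exact: Crep_const.
apply: Crep_mul; first exact: Crep_const.
apply: (@Crep_shift _ (fun m => \det (\matrix_(a < k, b < k) Bp M m (gx (fun b => g b) q (lift j b)) (f a).1 (f a).2)) c).
apply: Crep_det => a b.
by apply: Crep_ext (Crep_Bp _ _ _ hM) => n; rewrite mxE.
Qed.

Lemma gx_le k s0 (g : {ffun 'I_k -> 'I_s0}) q j :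
  (s0 <= q)%N -> (gx (fun b => g b) q j <= q)%N.
Proof.
move=> h; rewrite /gx; case: (unlift _ _) => [b|] //.
by apply: ltnW; apply: leq_trans (ltn_ord _) h.
Qed.

Lemma sum_delta (C : fieldType) r n x (F : nat -> 'M[C]_r) :
  (x < n)%N -> \sum_(i < n) (x == i :> nat)%:R *: F i = F x.
Proof.
move=> h; rewrite (bigD1 (Ordinal h)) //= eqxx scale1r big1 ?addr0 //.
move=> i; rewrite -val_eqE /= eq_sym => /negPf ->; by rewrite scale0r.
Qed.

Lemma lam_rel (C : numClosedFieldType) r (M : nat -> 'M[C]_r) k s0 q m :
  (s0 <= q)%N ->
  (forall (f : {ffun 'I_k -> 'I_r * 'I_r}) (g : {ffun 'I_k -> 'I_s0}) rho,
     mnr M m (fx f rho) (gx (fun b => g b) q) = 0) ->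
  \sum_(i < q.+1) lam M k s0 q i m *: Bp M m i = 0.
Proof.
move=> hq H.
have E : forall i : 'I_q.+1, lam M k s0 q i m *: Bp M m i =
  \sum_(f : {ffun 'I_k -> 'I_r * 'I_r}) \sum_(g : {ffun 'I_k -> 'I_s0})
   \sum_(j : 'I_k.+1)
   ((mnr M m f (fun b => g b))^* * cofm M m f (fun b => g b) q j) *:
     ((gx (fun b => g b) q j == i)%:R *: Bp M m i).
  move=> i; rewrite /lam scaler_suml; apply: eq_bigr => f _.
  rewrite scaler_suml; apply: eq_bigr => g _.
  rewrite mulr_sumr scaler_suml; apply: eq_bigr => j _.
  by rewrite [RHS]scalerA -mulrA (mulrC (cofm _ _ _ _ _ _)).
rewrite (eq_bigr _ (fun i _ => E i)) exchange_big /=.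
apply: big1 => f _; rewrite exchange_big; apply: big1 => g _.
rewrite exchange_big /=.
transitivity ((mnr M m f (fun b => g b))^* *:
   \sum_(j : 'I_k.+1) cofm M m f (fun b => g b) q j *: Bp M m (gx (fun b => g b) q j)).
  rewrite scaler_sumr; apply: eq_bigr => j _.
  rewrite -scaler_sumr sum_delta ?ltnS ?gx_le // scalerA.
  by [].
by rewrite rel_mx ?scaler0.
Qed.

Lemma lam_top (C : numClosedFieldType) r (M : nat -> 'M[C]_r) k s0 q m :
  (s0 <= q)%N -> lam M k s0 q q m = FF M k s0 m.
Proof.
move=> hq; rewrite /lam /FF; apply: eq_bigr => f _; apply: eq_bigr => g _.
rewrite (bigD1 ord_max) //= big1 ?addr0.
  by rewrite /gx unlift_none eqxx mul1r cofm_max mulrC.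
move=> j hj; rewrite /gx; case E: (unlift ord_max j) => [b|].
  have : (g b < q)%N by apply: leq_trans (ltn_ord _) hq.
  by rewrite ltn_neqAle => /andP [/negPf -> _]; rewrite mul0r.
by move: E hj; case: (unliftP ord_max j) => //= -> _; rewrite eqxx.
Qed.

Lemma reindex_if (C : fieldType) n a (G : nat -> C) :
  (a <= n)%N ->
  \sum_(p < n) (if (a <= p)%N then G p else 0) = \sum_(i < n - a) G (a + i)%N.
Proof.
move=> h.
rewrite -(big_mkord xpredT (fun p => if (a <= p)%N then G p else 0)).
rewrite (big_cat_nat (leq0n a) h) /= big_nat_cond big1 ?add0r; last first.
  by move=> i /andP [/andP [_ hi] _]; rewrite leqNgt hi.
rewrite -{1}(add0n a) big_addn big_mkord; apply: eq_bigr => i _.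
by rewrite leq_addl addnC.
Qed.

Lemma v_rel (C : numClosedFieldType) r (M : nat -> 'M[C]_r)
  (v : nat -> 'cV[C]_r) w k s0 q m :
  (forall k, w k != 0) ->
  (forall k, v k.+1 = (w k)^-1 *: (M k *m v k)) ->
  (s0 <= q)%N ->
  (forall (f : {ffun 'I_k -> 'I_r * 'I_r}) (g : {ffun 'I_k -> 'I_s0}) rho,
     mnr M m (fx f rho) (gx (fun b => g b) q) = 0) ->
  forall jj, \sum_(i < q.+1) lam M k s0 q i m * Wp w m i * v (m + i)%N jj 0 = 0.
Proof.
move=> hw0 hrec hq H jj.
transitivity (((\sum_(i < q.+1) lam M k s0 q i m *: Bp M m i) *m v m) jj 0);
  last by rewrite (lam_rel hq H) mul0mx mxE.
rewrite mulmx_suml summxE; apply: eq_bigr => i _.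
by rewrite -scalemxAl (Bp_v hw0 hrec) scalerA mxE.
Qed.

Unset Implicit Arguments.

Theorem mainTheorem6 (C : numClosedFieldType) (F : {pred C})
  (HF : divring_closed F) (r : nat) (hr : (0 < r)%N)
  (v : nat -> 'cV[C]_r) (w : nat -> C) (M : nat -> 'M[C]_r)
  (hvF : forall k (i : 'I_r), v k i 0 \in F)
  (hMF : forall k (i j : 'I_r), M k i j \in F)
  (hw : Cfinite w) (hwpos : forall k, 0 < w k)
  (hM : Cfinite_mx M)
  (hrec : forall k, v k.+1 = (w k)^-1 *: (M k *m v k)) :
  (forall j : 'I_r, C2finite (fun k => v k j 0)) /\
  (exists (s : nat) (c : nat -> nat -> C),
      C2coeffs s c /\ forall j : 'I_r, C2rec s c (fun k => v k j 0)).
Proof.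
suff H2 : exists (s : nat) (c : nat -> nat -> C),
      C2coeffs s c /\ forall j : 'I_r, C2rec s c (fun k => v k j 0).
  split => // j; case: H2 => s [c [hc hr']]; exists s, c; split => //.
have hw0 : forall k, w k != 0 by move=> k; move: (hwpos k); rewrite lt0r => /andP [].
have [k [[s0 Hs0] nPk]] := switch (Pk1 M hr) (@notPk_big _ _ M).
have [t Ht] := Cfinite_runs (Crep_Cfinite (Crep_FF k s0 hM)).
pose J := t.
pose Q1 := (s0 + J).+1.
have [N1 HN1] : evz (FF M k.+1 Q1).
  apply: NNPP => ne; apply: nPk; by exists Q1.
pose K := maxn N1 t.
pose s := (K + (s0 + J))%N.
have valid : forall m q, (N1 <= m)%N -> (q <= s0 + J)%N ->
  forall (f : {ffun 'I_k -> 'I_r * 'I_r}) (g : {ffun 'I_k -> 'I_s0}) rho,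
     mnr M m (fx f rho) (gx (fun b => g b) q) = 0.
  move=> m q hm hq f g rho.
  have := FF_eq0 (HN1 m hm) [ffun a => fx f rho a] [ffun b => inord (gx (fun b => g b) q b)].
  move <-; apply: mnr_ext => b; rewrite ffunE //= inordK //.
  rewrite ltnS /gx; case: (unlift _ _) => [b'|] //.
  by apply: ltnW; apply: leq_trans (ltn_ord _) (leq_addr _ _).
pose cc (p n : nat) : C := \sum_(j < J.+1)
  (if (K + j <= p)%N then lam M k s0 (s0 + J - j)%N (p - (K + j))%N (n + K + j)%N *
                        Wp w (n + K + j)%N (p - (K + j))%N else 0).
have sum0 : forall n (jj : 'I_r),
    \sum_(p < s.+1) cc p n * v (n + p)%N jj 0 = 0.
  move=> n jj; rewrite /cc.
  under eq_bigr => p _ do rewrite mulr_suml.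
  rewrite exchange_big /=; apply: big1 => j _.
  have hj : (j <= J)%N by rewrite -ltnS.
  transitivity (\sum_(p < s.+1) (if (K + j <= p)%N then
      lam M k s0 (s0 + J - j)%N (p - (K + j))%N (n + K + j)%N *
      Wp w (n + K + j)%N (p - (K + j))%N * v (n + p)%N jj 0 else 0)).
    by apply: eq_bigr => p _; case: ifP => _ //; rewrite mul0r.
  rewrite (reindex_if (C := C) (n := s.+1) (a := (K + j)%N) (fun p =>
      lam M k s0 (s0 + J - j)%N (p - (K + j))%N (n + K + j)%N *
      Wp w (n + K + j)%N (p - (K + j))%N * v (n + p)%N jj 0)); last by rewrite /s; lia.
  rewrite /s; have -> : ((K + (s0 + J)).+1 - (K + j) = (s0 + J - j).+1)%N by lia.
  transitivity (\sum_(i < (s0 + J - j).+1) lam M k s0 (s0 + J - j)%N i (n + K + j)%N *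
        Wp w (n + K + j)%N i * v (n + K + j + i)%N jj 0).
    by apply: eq_bigr => i _; rewrite addKn !addnA.
  apply: (v_rel hw0 hrec _ (valid (n + K + j)%N (s0 + J - j)%N _ _) jj).
  - lia.
  - rewrite /K; lia.
  - lia.
have Crep_cc : forall p, Crep (cc p).
  move=> p; rewrite /cc; apply: Crep_sum => j _; case: (K + j <= p)%N; last exact: Crep_const.
  apply: Crep_mul.
    apply: Crep_ext (Crep_lam k s0 (s0 + J - j)%N (p - (K + j))%N (K + j)%N hM) => n.
    by rewrite addnA.
  apply: Crep_ext (Crep_Wp (p - (K + j))%N (K + j)%N hw) => n.
  by rewrite addnA.
have Wpos : forall m i, 0 < Wp w m i by move=> m i; apply: prodr_gt0 => l _.
have top : forall n, cc s n != 0.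
  move=> n; apply/negP => /eqP Z.
  have T : forall j : 'I_J.+1, (if (K + j <= s)%N then
      lam M k s0 (s0 + J - j)%N (s - (K + j))%N (n + K + j)%N *
      Wp w (n + K + j)%N (s - (K + j))%N else 0) =
      FF M k s0 (n + K + j)%N * Wp w (n + K + j)%N (s0 + J - j)%N.
    move=> j; have hj : (j <= J)%N by rewrite -ltnS.
    rewrite ifT; last by rewrite /s; lia.
    have -> : (s - (K + j) = s0 + J - j)%N by rewrite /s; lia.
    by rewrite lam_top //; lia.
  have nn : forall j : 'I_J.+1, true -> 0 <= FF M k s0 (n + K + j)%N * Wp w (n + K + j)%N (s0 + J - j)%N.
    by move=> j _; rewrite mulr_ge0 ?FF_ge0 ?ltW.
  rewrite /cc (eq_bigr _ (fun j _ => T j)) in Z.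
  have Z1 := psumr_eq0P nn Z.
  apply: Hs0; exists (n + K)%N.
  apply: (Ht (n + K)%N); first by rewrite /K; lia.
  move=> m /andP [h1 h2].
  have hjm : (m - (n + K) < J.+1)%N by rewrite /J; lia.
  have := Z1 (Ordinal hjm) isT; rewrite /= => /eqP.
  rewrite mulf_eq0 (gt_eqF (Wpos _ _)) orbF => /eqP.
  by have -> : (n + K + (m - (n + K)))%N = m by lia.
exists s, (fun i n => if i == s then cc s n else - cc i n); split; first split.
- move=> i hi; apply: Crep_Cfinite; case: eqP => _; first exact: Crep_cc.
  apply: Crep_ext (Crep_mul (Crep_const (-1)) (Crep_cc i)) => n.
  by rewrite mulN1r.
- by move=> n; rewrite eqxx.
- move=> jj n _; rewrite eqxx.
  have := sum0 n jj; rewrite big_ord_recr /= => /eqP; rewrite addrC addr_eq0 => /eqP ->.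
  rewrite -sumrN; apply: eq_bigr => i _; rewrite (ltn_eqF (ltn_ord i)) mulNr.
  by [].
Qed.
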